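(* Let $U=[N]=\{1,\dots,N\}$ be a finite set of candidate neurons, let $\tau\in(0,1]$ be a threshold, and let $E:2^{[N]}\to[0,1]$ be the (regime-conditional) strength set function defined in the context below. Let $A^\star=\{j\in[N]: E(\{j\})\ge\tau\}$ be the set of $\tau$-agonists. Consider the binary hierarchical search procedure $\mathrm{Search}(U)$: for the current group $U$ it computes an upper confidence bound $\widehat{E}^{\mathrm{UCB}}(U)$ from finite-sample estimates; if $\widehat{E}^{\mathrm{UCB}}(U)<\tau$ it prunes $U$ (returns $\emptyset$); otherwise, if $|U|=1$, say $U=\{j\}$, it queries $j$ as a singleton (computing a point estimate $\hat E(\{j\})$ and returning $\{j\}$ if $\hat E(\{j\})\ge\tau$, else $\emptyset$); otherwise it splits $U$ into two halves $U_1,U_2$ and returns $\mathrm{Search}(U_1)\cup\mathrm{Search}(U_2)$. Let $\mathcal{T}$ be the set of all groups (nodes of the full binary splitting tree) that could possibly be queried by this procedure. Assume: (A2) for every group $A$ queried by the search, $A\cap A^\star\neq\emptyset$ implies $E(A)\ge\tau$; (A3) for each tested group $A$, the upper confidence bound satisfies $\Pr\big[E(A)\le\widehat{E}^{\mathrm{UCB}}(A)\big]\ge 1-\alpha_A$, and a group is pruned only if $\widehat{E}^{\mathrm{UCB}}(A)<\tau$; and assume the confidence budgets satisfy $\sum_{A\in\mathcal{T}}\alpha_A\le\alpha_{\mathrm{tot}}$ (equivalently, an alpha-spending schedule over the full tree with total budget at most $\alpha_{\mathrm{tot}}$). Then, with probability at least $1-\alpha_{\mathrm{tot}}$, the procedure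 does not prune any group $A$ that contains an element of $A^\star$. Consequently, with this probability every $j\in A^\star$ lies on an unpruned root-to-leaf path of the splitting tree and is eventually queried as a singleton.
   Context: Setting: a fixed layer of a language model with $N$ candidate neurons (scalar activations) and a fixed baseline regime $b\in\{0,1\}$. Two finite evaluation sets (slices) $\mathcal{D}^+$ and $\mathcal{D}^-$ consist of inputs on which the un-intervened model's binary behavior label equals $b$. For a set $A\subseteq[N]$, the intervention $\mathrm{do}(A)$ replaces the activations of the neurons in $A$ by fixed baseline values, and $\delta_{S}(A)=\Pr_{x\sim\mathcal{D}^S}[\text{post-intervention behavior label of }x\neq b]$ for $S\in\{+,-\}$ (uniform distribution on the slice). The strength is $E(A)=\max\{\delta_+(A),\delta_-(A)\}$. A neuron $j$ is a $\tau$-agonist if $E(\{j\})\ge\tau$. The flip rates are estimated on finite samples, and $\widehat{E}^{\mathrm{UCB}}(A)$ denotes the resulting upper confidence bound on $E(A)$ (e.g., the maximum of one-sided Clopper–Pearson upper bounds for the two slices). *)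

(* Defs.v *)
From mathcomp Require Import all_boot all_order all_algebra.
Set Implicit Arguments. Unset Strict Implicit. Unset Printing Implicit Defensive.
Import Order.TTheory GRing.Theory Num.Theory.
Local Open Scope ring_scope.

(* Neurons are indexed by 'I_N (i.e. {0,..,N-1}, a relabelling of [N]).
   A node of the binary splitting tree is an interval (lo, n) denoting the
   group {lo, ..., lo+n-1}. *)

Definition grp (N : nat) (p : nat * nat) : {set 'I_N} :=
  [set i : 'I_N | (p.1 <= i < p.1 + p.2)%N].

(* All nodes of the full binary splitting tree rooted at (lo, n);
   k is a recursion-depth bound (k = N suffices for the root (0, N)). *)
Fixpoint tnodes (k lo n : nat) : seq (nat * nat) :=
  (lo, n) :: (match k with
              | 0 => [::]
              | k'.+1 => if (1 < n)%N then
                           tnodes k' lo n./2 ++ tnodes k' (lo + n./2) (n - n./2)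
                         else [::]
              end).

Definition treeT (N : nat) : {set {set 'I_N}} :=
  [set A : {set 'I_N} | A \in [seq grp N p | p <- tnodes N 0 N]].

Definition agonists (R : realFieldType) (N : nat) (E : {set 'I_N} -> R) (tau : R)
  : {set 'I_N} := [set j : 'I_N | tau <= E [set j]].

(* The procedure Search, for fixed realized statistics:
   ucb A = upper confidence bound computed for group A,
   ehat j = point estimate of E({j}).
   Returns (list of queried nodes, output set). *)
Fixpoint search_run (R : realFieldType) (N : nat) (ucb : {set 'I_N} -> R)
    (ehat : 'I_N -> R) (tau : R) (k lo n : nat) : seq (nat * nat) * {set 'I_N} :=
  let A := grp N (lo, n) in
  if ucb A < tau then ([:: (lo, n)], set0)
  else if (n < 2)%N then
    ([:: (lo, n)], [set j in A | tau <= ehat j])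
  else match k with
       | 0 => ([:: (lo, n)], set0)
       | k'.+1 =>
           let r1 := search_run ucb ehat tau k' lo n./2 in
           let r2 := search_run ucb ehat tau k' (lo + n./2) (n - n./2) in
           ((lo, n) :: r1.1 ++ r2.1, r1.2 :|: r2.2)
       end.

Definition queried (R : realFieldType) (N : nat) (ucb : {set 'I_N} -> R)
    (ehat : 'I_N -> R) (tau : R) : seq (nat * nat) :=
  (search_run ucb ehat tau N 0 N).1.

Definition pruned (R : realFieldType) (N : nat) (ucb : {set 'I_N} -> R) (tau : R)
    (A : {set 'I_N}) : bool := ucb A < tau.

Definition Pr (R : realFieldType) (Omega : finType) (P : Omega -> R)
    (ev : pred Omega) : R := \sum_(w | ev w) P w.

(* Main.v *)
Require Import Defs.
From mathcomp Require Import all_boot all_order all_algebra.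
From mathcomp Require Import zify lra.
Import Order.TTheory GRing.Theory Num.Theory.
Local Open Scope ring_scope.

Section Aux.
Variables (R : realFieldType) (N : nat) (u : {set 'I_N} -> R) (eh : 'I_N -> R) (tau : R).

Lemma sub_tnodes k lo n : {subset (search_run u eh tau k lo n).1 <= tnodes k lo n}.
Proof.
elim: k lo n => [|k IH] lo n p /=.
  by case: ifP => _; [|case: ifP => _]; rewrite mem_seq1 => /eqP ->.
case: ifP => _; first by rewrite mem_seq1 => /eqP ->; rewrite inE eqxx.
case: ifP => Hn; first by rewrite mem_seq1 => /eqP ->; rewrite inE eqxx.
have -> : (1 < n)%N by move: Hn; rewrite ltnNge => /negbFE; lia.
rewrite /= !inE mem_cat => /orP [->//|/orP [/IH|/IH]] H; rewrite mem_cat H ?orbT //.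
Qed.

Lemma reach k lo n (j : 'I_N) : (n <= k.+1)%N -> j \in grp N (lo, n) ->
  (forall p, p \in (search_run u eh tau k lo n).1 -> j \in grp N p -> ~~ (u (grp N p) < tau)) ->
  has (fun p => (grp N p == [set j]) && ~~ (u (grp N p) < tau)) (search_run u eh tau k lo n).1.
Proof.
elim: k lo n => [|k IH] lo n Hnk Hj H.
  have Hr := H (lo, n). move: Hr Hnk Hj H.
  rewrite /=; case: ifP => Hu; first by move=> Hr; have := Hr (mem_head _ _) => /(_ _)/negP; move=> X _ Hj; by case: (X Hj).
  move=> _ Hn1; have -> : (n < 2)%N by lia.
  move=> Hj _ /=; rewrite Hu andbT orbF.
  apply/eqP/setP => i; rewrite !inE; move: Hj; rewrite inE /= => Hj.
  apply/idP/idP; first by move=> Hi; apply/eqP/val_inj => /=; lia.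
  by move/eqP ->; lia.
have Hr := H (lo, n). move: Hr Hnk Hj H.
rewrite /=; case: ifP => Hu.
  by move=> Hr _ Hj _; have := Hr (mem_head _ _) Hj.
move=> _ Hnk Hj H; case: ifP => Hn.
  move: H => /= _; rewrite Hu andbT orbF.
  apply/eqP/setP => i; rewrite !inE; move: Hj; rewrite inE /= => Hj.
  apply/idP/idP; first by move=> Hi; apply/eqP/val_inj => /=; lia.
  by move/eqP ->; lia.
rewrite /= has_cat.
have Hn2 : (1 < n)%N by lia.
move: Hj; rewrite inE /= => /andP [Hj1 Hj2].
rewrite Hn in H.
have [Hm1 Hm2] : (n./2 + n./2 <= n)%N /\ (n <= (n./2 + n./2).+1)%N.
  by move: (odd_double_half n); rewrite -addnn; case: (odd n) => /= E; lia.
have [Hl|Hr] : (j < lo + n./2)%N \/ (lo + n./2 <= j)%N by lia.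
  apply/orP; right; apply/orP; left; apply: IH.
  - lia.
  - by rewrite inE /=; apply/andP; split; lia.
  - by move=> p Hp; apply: H; rewrite inE mem_cat Hp orbT.
apply/orP; right; apply/orP; right; apply: IH.
- lia.
- by rewrite inE /=; apply/andP; split; lia.
- by move=> p Hp; apply: H; rewrite inE mem_cat Hp !orbT.
Qed.
End Aux.

Lemma Pr_ind (R : realFieldType) (Omega : finType) (P : Omega -> R) (e : pred Omega) :
  Pr P e = \sum_w (if e w then P w else 0).
Proof. by rewrite /Pr big_mkcond. Qed.

Lemma Pr_mono (R : realFieldType) (Omega : finType) (P : Omega -> R) (e1 e2 : pred Omega) :
  (forall w, 0 <= P w) -> (forall w, e1 w -> e2 w) -> Pr P e1 <= Pr P e2.
Proof.
move=> HP H; rewrite !Pr_ind; apply: ler_sum => w _.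
case: ifP => h1; first by rewrite (H _ h1).
by case: ifP.
Qed.

Lemma PrC (R : realFieldType) (Omega : finType) (P : Omega -> R) (e : pred Omega) :
  \sum_w P w = 1 -> Pr P (fun w => ~~ e w) = 1 - Pr P e.
Proof.
move=> H1; rewrite -H1 (bigID e) /= /Pr; by rewrite addrC addrK.
Qed.
Theorem theoremB1 (R : realFieldType) (N : nat) (tau : R)
    (E : {set 'I_N} -> R)
    (Omega : finType) (P : Omega -> R)
    (ucb : Omega -> {set 'I_N} -> R) (ehat : Omega -> 'I_N -> R)
    (alpha : {set 'I_N} -> R) (alpha_tot : R) :
  0 < tau -> tau <= 1 ->
  (forall A, 0 <= E A <= 1) ->
  (forall w, 0 <= P w) -> \sum_w P w = 1 ->
  (* (A2) *)
  (forall w p, p \in queried (ucb w) (ehat w) tau ->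
     grp N p :&: agonists E tau != set0 -> tau <= E (grp N p)) ->
  (* (A3) *)
  (forall A, A \in treeT N ->
     1 - alpha A <= Pr P (fun w => E A <= ucb w A)) ->
  \sum_(A in treeT N) alpha A <= alpha_tot ->
  1 - alpha_tot <= Pr P (fun w =>
    all (fun p => (grp N p :&: agonists E tau != set0) ==>
                  ~~ pruned (ucb w) tau (grp N p))
        (queried (ucb w) (ehat w) tau)
    && [forall j in agonists E tau,
          has (fun p => (grp N p == [set j]) && ~~ pruned (ucb w) tau (grp N p))
              (queried (ucb w) (ehat w) tau)]).
Proof.
move=> Htau0 Htau1 HE HP HP1 HA2 HA3 Hsum.
pose G := fun w => [forall A in treeT N, E A <= ucb w A].
have HG : 1 - alpha_tot <= Pr P G.
  have Hc : Pr P (fun w => ~~ G w) <= \sum_(A in treeT N) alpha A.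
    apply: (@le_trans _ _ (\sum_(A in treeT N) Pr P (fun w => ~~ (E A <= ucb w A)))).
      rewrite Pr_ind (eq_bigr (fun A => \sum_w (if ~~ (E A <= ucb w A) then P w else 0)));
        last by move=> A _; rewrite Pr_ind.
      rewrite exchange_big /=; apply: ler_sum => w _.
      case: ifP => Hg.
        move/forallPn: Hg => [A]; rewrite negb_imply => /andP[HA HEA].
        rewrite (bigD1 A) //= HEA lerDl; apply: sumr_ge0 => B _; by case: ifP.
      by apply: sumr_ge0 => B _; case: ifP.
    apply: ler_sum => A HA; rewrite PrC //; have := HA3 A HA; lra.
  rewrite PrC // in Hc; lra.
apply: le_trans HG _; apply: Pr_mono => // w /forallP HGw.
have Hnp : forall p, p \in queried (ucb w) (ehat w) tau ->
    grp N p :&: agonists E tau != set0 -> ~~ pruned (ucb w) tau (grp N p).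
  move=> p Hp Hne; rewrite /pruned -leNgt; apply: le_trans (HA2 w p Hp Hne) _.
  have := HGw (grp N p); rewrite (_ : grp N p \in treeT N) //.
  by rewrite inE; apply: map_f; exact: sub_tnodes Hp.
apply/andP; split.
  by apply/allP => p Hp; apply/implyP; exact: Hnp.
apply/forallP => j; apply/implyP => Hj.
apply: reach => //.
  by rewrite inE /= ltn_ord.
move=> p Hp Hjp; apply: Hnp Hp _; apply/set0Pn; exists j; by rewrite inE Hjp Hj.
Qed.
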